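(* Assume the Bellman setting below and hypotheses (H1)–(H4). For each $i$ let $\mathcal P_i'$ be a nonempty subset of $\mathcal P_i$ and put $\mathcal P'=\mathcal P_0'\times\cdots\times\mathcal P_M'$. Suppose $A(P)$ is nonsingular for every $P\in\mathcal P'$, and that for every $U\in\mathbb R^{M+1}$, $H(U;\mathcal P)\le0$ whenever $H(U;\mathcal P')=0$, where $H(U;\mathcal Q)=\sup_{P\in\mathcal Q}\{-A(P)U+y(P)\}$. Then every sequence $(U^\ell)_\ell$ produced by $\epsilon$-policy iteration on $\mathcal P'$ converges to the unique solution of the Bellman problem $H(U;\mathcal P)=0$.
   Context: Bellman setting: Let $M\ge 0$ be an integer and $\mathcal P=\mathcal P_0\times\cdots\times\mathcal P_M$ a product of nonempty sets; write $P=(P_0,\dots,P_M)\in\mathcal P$. Let $A:\mathcal P\to\mathbb R^{(M+1)\times(M+1)}$ and $y:\mathcal P\to\mathbb R^{M+1}$ be row-decoupled: for each $i$, the $i$-th row of $A(P)$ and the $i$-th entry of $y(P)$ depend only on $P_i$. Inequalities between vectors are entrywise and suprema of families of vectors are entrywise. $\vec e=(1,\dots,1)^\top$. Row $i$ of a matrix $(a_{ij})$ is strictly diagonally dominant (s.d.d.) if $|a_{ii}|>\sum_{j\ne i}|a_{ij}|$, weakly diagonally dominant (w.d.d.) if $|a_{ii}|\ge\sum_{j\ne i}|a_{ij}|$; a matrix is w.d.d. if all rows are. A Z-matrix is a real matrix with nonpositive off-diagonal entries. (H1): $P\mapsto A(P)^{-1}$ is bounded on $\{P: A(P)\text{ nonsingular}\}$.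 (H2): $A$ and $y$ are bounded. (H3): for each $P$, $A(P)$ is a w.d.d. Z-matrix with nonnegative diagonal entries, and $[A(P)]_{ii}\le1$ whenever row $i$ of $A(P)$ is not s.d.d. Define $[\hat y(P)]_i=[y(P)]_i$ if row $i$ of $A(P)$ is not s.d.d. and $-\infty$ otherwise, and $[\mathbb M X]_i=\sup_{P\in\mathcal P}\{(1-[A(P)]_{ii})X_i-\sum_{j\ne i}[A(P)]_{ij}X_j+[\hat y(P)]_i\}$ for vectors with entries in $[-\infty,\infty)$, with conventions $0\cdot(-\infty)=0$ and any sum containing $-\infty$ equals $-\infty$; $\mathbb M^0=I$, $\mathbb M^k=\mathbb M\circ\mathbb M^{k-1}$. (H4): for each $U\in\mathbb R^{M+1}$ and each $i$ there exist integers $0\le m_1<m_2$ with $[\mathbb M^{m_1}U]_i>[\mathbb M^{m_2}U]_i$. $\epsilon$-policy iteration on $\mathcal Q=\mathcal Q_0\times\cdots\times\mathcal Q_M$: pick any $U^0$ and positive $(\epsilon^\ell)_{\ell\ge1}$ with $\sum\epsilon^\ell<\infty$; for $\ell\ge1$ pick $P^\ell\in\mathcal Q$ with $-A(P^\ell)U^{\ell-1}+y(P^\ell)+\epsilon^\ell\vec e\ge\sup_{P\in\mathcal Q}\{-A(P)U^{\ell-1}+y(P)\}$ and let $U^\ell$ solve $A(P^\ell)U^\ell=y(P^\ell)$. *)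

(* Defs.v *)
From Stdlib Require Import Reals Lra ClassicalEpsilon.
Open Scope R_scope.

(* Indices are natural numbers 0..M; vectors are nat -> R (entries > M unused).
   Policies: a single ambient type T; P_i is a predicate on T; a policy is
   P : nat -> T, and P lies in the product set iff P i satisfies P_i for i <= M.
   Row-decoupling is built in: the (i,j) entry of A(P) is  a i (P i) j  and the
   i-th entry of y(P) is  y i (P i). *)

(* Extended reals [-oo, oo): None = -oo. *)
Definition ext := option R.
Definition eadd (x z : ext) : ext :=
  match x, z with Some u, Some v => Some (u + v) | _, _ => None end.
(* c * x, with 0 * (-oo) = 0  (only used with c >= 0 in relevant cases) *)
Definition emul (c : R) (x : ext) : ext :=
  match x with
  | Some v => Some (c * v)
  | None => if Req_EM_T c 0 then Some 0 else None
  end.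
Definition elt (x z : ext) : Prop :=
  match x, z with
  | None, Some _ => True
  | Some u, Some v => u < v
  | _, _ => False
  end.
Definition ele (x z : ext) : Prop :=
  match x, z with
  | None, _ => True
  | Some u, Some v => u <= v
  | Some _, None => False
  end.
Fixpoint esum (f : nat -> ext) (n : nat) : ext :=
  match n with O => f O | S k => eadd (esum f k) (f (S k)) end.

(* Supremum of a family of [-oo,oo) values, given the set S of its finite values:
   -oo if S is empty, the least upper bound if S is nonempty and bounded.
   (The unbounded case, +oo, never arises under (H2); it is sent to -oo.) *)
Definition esup (S : R -> Prop) : ext :=
  match excluded_middle_informative (bound S /\ exists x, S x) with
  | left h => Some (proj1_sig (completeness S (proj1 h) (proj2 h)))
  | right _ => None
  end.

Definition inP (M : nat) {T : Type} (Q : nat -> T -> Prop) (P : nat -> T) : Prop :=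
  forall i, (i <= M)%nat -> Q i (P i).

Definition Amat {T : Type} (a : nat -> T -> nat -> R) (P : nat -> T) : nat -> nat -> R :=
  fun i j => a i (P i) j.

Definition matvec (M : nat) {T : Type} (a : nat -> T -> nat -> R) (P : nat -> T)
  (U : nat -> R) (i : nat) : R :=
  sum_f_R0 (fun j => a i (P i) j * U j) M.

Definition Hsup (M : nat) {T : Type} (a : nat -> T -> nat -> R) (y : nat -> T -> R)
  (Q : nat -> T -> Prop) (U : nat -> R) (i : nat) : ext :=
  esup (fun r => exists P, inP M Q P /\ r = - matvec M a P U i + y i (P i)).

Definition offdiag_abs (M : nat) {T : Type} (a : nat -> T -> nat -> R) (i : nat) (t : T) : R :=
  sum_f_R0 (fun j => if Nat.eq_dec j i then 0 else Rabs (a i t j)) M.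

Definition sdd_row (M : nat) {T : Type} (a : nat -> T -> nat -> R) (i : nat) (t : T) : Prop :=
  Rabs (a i t i) > offdiag_abs M a i t.
Definition wdd_row (M : nat) {T : Type} (a : nat -> T -> nat -> R) (i : nat) (t : T) : Prop :=
  Rabs (a i t i) >= offdiag_abs M a i t.

Definition yhat (M : nat) {T : Type} (a : nat -> T -> nat -> R) (y : nat -> T -> R)
  (i : nat) (t : T) : ext :=
  match excluded_middle_informative (sdd_row M a i t) with
  | left _ => None
  | right _ => Some (y i t)
  end.

Definition Mterm (M : nat) {T : Type} (a : nat -> T -> nat -> R) (y : nat -> T -> R)
  (i : nat) (t : T) (X : nat -> ext) : ext :=
  eadd (eadd (emul (1 - a i t i) (X i))
             (esum (fun j => if Nat.eq_dec j i then Some 0 else emul (- a i t j) (X j)) M))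
       (yhat M a y i t).

Definition Mop (M : nat) {T : Type} (a : nat -> T -> nat -> R) (y : nat -> T -> R)
  (Pset : nat -> T -> Prop) (X : nat -> ext) (i : nat) : ext :=
  esup (fun r => exists P, inP M Pset P /\ Mterm M a y i (P i) X = Some r).

Fixpoint Mpow (M : nat) {T : Type} (a : nat -> T -> nat -> R) (y : nat -> T -> R)
  (Pset : nat -> T -> Prop) (k : nat) (X : nat -> ext) : nat -> ext :=
  match k with
  | O => X
  | S k' => Mop M a y Pset (Mpow M a y Pset k' X)
  end.

Definition matmul_entry (M : nat) (A B : nat -> nat -> R) (i j : nat) : R :=
  sum_f_R0 (fun k => A i k * B k j) M.

Definition is_inverse (M : nat) (A B : nat -> nat -> R) : Prop :=
  forall i j, (i <= M)%nat -> (j <= M)%nat ->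
    matmul_entry M A B i j = (if Nat.eq_dec i j then 1 else 0) /\
    matmul_entry M B A i j = (if Nat.eq_dec i j then 1 else 0).

Definition nonsingular (M : nat) (A : nat -> nat -> R) : Prop :=
  exists B, is_inverse M A B.

Definition H1 (M : nat) {T : Type} (a : nat -> T -> nat -> R) (Pset : nat -> T -> Prop) : Prop :=
  exists C, forall P B, inP M Pset P -> is_inverse M (Amat a P) B ->
    forall i j, (i <= M)%nat -> (j <= M)%nat -> Rabs (B i j) <= C.

Definition H2 (M : nat) {T : Type} (a : nat -> T -> nat -> R) (y : nat -> T -> R)
  (Pset : nat -> T -> Prop) : Prop :=
  exists C, forall P, inP M Pset P ->
    forall i, (i <= M)%nat -> Rabs (y i (P i)) <= C /\
      forall j, (j <= M)%nat -> Rabs (a i (P i) j) <= C.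

Definition H3 (M : nat) {T : Type} (a : nat -> T -> nat -> R) (Pset : nat -> T -> Prop) : Prop :=
  forall P, inP M Pset P -> forall i, (i <= M)%nat ->
    wdd_row M a i (P i) /\
    (forall j, (j <= M)%nat -> j <> i -> a i (P i) j <= 0) /\
    0 <= a i (P i) i /\
    (~ sdd_row M a i (P i) -> a i (P i) i <= 1).

Definition H4 (M : nat) {T : Type} (a : nat -> T -> nat -> R) (y : nat -> T -> R)
  (Pset : nat -> T -> Prop) : Prop :=
  forall (U : nat -> R) i, (i <= M)%nat ->
    exists m1 m2, (m1 < m2)%nat /\
      elt (Mpow M a y Pset m2 (fun j => Some (U j)) i)
          (Mpow M a y Pset m1 (fun j => Some (U j)) i).

Definition eps_policy_iteration (M : nat) {T : Type} (a : nat -> T -> nat -> R)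
  (y : nat -> T -> R) (Q : nat -> T -> Prop)
  (eps : nat -> R) (Pol : nat -> nat -> T) (U : nat -> nat -> R) : Prop :=
  (forall l, (1 <= l)%nat -> 0 < eps l) /\
  (exists s, Un_cv (fun n => sum_f_R0 eps n) s) /\
  forall l, (1 <= l)%nat ->
    inP M Q (Pol l) /\
    (forall i, (i <= M)%nat ->
       ele (Hsup M a y Q (U (l - 1)%nat) i)
           (Some (- matvec M a (Pol l) (U (l - 1)%nat) i + y i (Pol l i) + eps l))) /\
    (forall i, (i <= M)%nat -> matvec M a (Pol l) (U l) i = y i (Pol l i)).

(* Main.v *)
Require Import Defs.
From Stdlib Require Import Reals Lra Lia ClassicalEpsilon Classical.
Open Scope R_scope.

Lemma sum_split (f : nat -> R) (n p : nat) : (p <= n)%nat ->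
  sum_f_R0 f n = f p + sum_f_R0 (fun j => if Nat.eq_dec j p then 0 else f j) n.
Proof.
  induction n as [|n IH]; intros Hp.
  - assert (p = 0%nat) by lia; subst. simpl. destruct (Nat.eq_dec 0 0); [lra|congruence].
  - destruct (Nat.eq_dec p (S n)) as [->|ne].
    + rewrite !tech5. destruct (Nat.eq_dec (S n) (S n)); [|congruence].
      rewrite (sum_eq (fun j => if Nat.eq_dec j (S n) then 0 else f j) f).
      * lra.
      * intros i Hi. destruct (Nat.eq_dec i (S n)); [lia|reflexivity].
    + rewrite !tech5. rewrite (IH ltac:(lia)). destruct (Nat.eq_dec (S n) p); [lia|]. lra.
Qed.

Lemma sum_opp (f : nat -> R) n : sum_f_R0 (fun j => - f j) n = - sum_f_R0 f n.
Proof. induction n; simpl; [lra|rewrite IHn; lra]. Qed.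

Lemma sum_nonneg (f : nat -> R) n : (forall j, (j <= n)%nat -> 0 <= f j) -> 0 <= sum_f_R0 f n.
Proof.
  intros H. induction n; simpl.
  - apply H; lia.
  - assert (0 <= f (S n)) by (apply H; lia). assert (0 <= sum_f_R0 f n) by (apply IHn; intros; apply H; lia). lra.
Qed.

Lemma sum_nonneg_zero (f : nat -> R) n : (forall j, (j <= n)%nat -> 0 <= f j) ->
  sum_f_R0 f n = 0 -> forall j, (j <= n)%nat -> f j = 0.
Proof.
  intros H. induction n; simpl; intros Hs j Hj.
  - assert (j = 0%nat) by lia; subst; auto.
  - assert (0 <= f (S n)) by (apply H; lia).
    assert (0 <= sum_f_R0 f n) by (apply sum_nonneg; intros; apply H; lia).
    destruct (Nat.eq_dec j (S n)) as [->|ne]; [lra|].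
    apply IHn; [intros; apply H; lia|lra|lia].
Qed.

Lemma sum_exch (f : nat -> nat -> R) m n :
  sum_f_R0 (fun j => sum_f_R0 (fun k => f j k) n) m = sum_f_R0 (fun k => sum_f_R0 (fun j => f j k) m) n.
Proof.
  induction m; simpl.
  - reflexivity.
  - rewrite IHm. rewrite <- sum_plus. apply sum_eq. intros; reflexivity.
Qed.

Lemma sum_delta (g : nat -> R) n i : (i <= n)%nat ->
  sum_f_R0 (fun k => (if Nat.eq_dec i k then 1 else 0) * g k) n = g i.
Proof.
  intros Hi. rewrite (sum_split _ n i Hi).
  destruct (Nat.eq_dec i i); [|congruence].
  rewrite (sum_eq _ (fun _ => 0)).
  - rewrite sum_cte. lra.
  - intros k Hk. destruct (Nat.eq_dec k i); [reflexivity|]. destruct (Nat.eq_dec i k); [lia|lra].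
Qed.

Lemma sum_le_cte (f : nat -> R) n c : (forall j, (j <= n)%nat -> f j <= c) -> sum_f_R0 f n <= c * INR (S n).
Proof. intros H. rewrite <- sum_cte. apply sum_Rle. auto. Qed.

Lemma fin_eps n (Q : nat -> R -> Prop) :
  (forall p, (p <= n)%nat -> exists e, 0 < e /\ forall d, 0 < d < e -> Q p d) ->
  exists e, 0 < e /\ forall d, 0 < d < e -> forall p, (p <= n)%nat -> Q p d.
Proof.
  induction n; intros H.
  - destruct (H 0%nat (le_n 0)) as [e [He Hq]]. exists e; split; auto.
    intros d Hd p Hp. assert (p = 0%nat) by lia; subst; auto.
  - destruct IHn as [e1 [He1 H1']]. { intros; apply H; lia. }
    destruct (H (S n) (le_n _)) as [e2 [He2 H2']].
    exists (Rmin e1 e2). split. { apply Rmin_case; lra. }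
    intros d Hd p Hp. pose proof (Rmin_l e1 e2). pose proof (Rmin_r e1 e2).
    destruct (Nat.eq_dec p (S n)) as [->|ne].
    + apply H2'; lra.
    + apply H1'; [lra|lia].
Qed.

Lemma fin_N n (Q : nat -> nat -> Prop) :
  (forall p, (p <= n)%nat -> exists N, forall k, (k >= N)%nat -> Q p k) ->
  exists N, forall k, (k >= N)%nat -> forall p, (p <= n)%nat -> Q p k.
Proof.
  induction n; intros H.
  - destruct (H 0%nat (le_n 0)) as [N HN]. exists N. intros k Hk p Hp.
    assert (p = 0%nat) by lia; subst; auto.
  - destruct IHn as [N1 H1']. { intros; apply H; lia. }
    destruct (H (S n) (le_n _)) as [N2 H2'].
    exists (max N1 N2). intros k Hk p Hp.
    destruct (Nat.eq_dec p (S n)) as [->|ne].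
    + apply H2'; lia.
    + apply H1'; lia.
Qed.

Lemma fin_argmax n (x : nat -> R) : exists p, (p <= n)%nat /\ forall j, (j <= n)%nat -> x j <= x p.
Proof.
  induction n.
  - exists 0%nat. split; [lia|]. intros j Hj. assert (j = 0%nat) by lia; subst; lra.
  - destruct IHn as [p [Hp Hm]].
    destruct (Rle_dec (x p) (x (S n))).
    + exists (S n). split; [lia|]. intros j Hj. destruct (Nat.eq_dec j (S n)) as [->|]; [lra|].
      specialize (Hm j ltac:(lia)). lra.
    + exists p. split; [lia|]. intros j Hj. destruct (Nat.eq_dec j (S n)) as [->|]; [lra|].
      apply Hm; lia.
Qed.

Lemma glue {T : Type} (t0 : T) n (Rl : nat -> T -> Prop) :
  (forall i, (i <= n)%nat -> exists t, Rl i t) -> exists f : nat -> T, forall i, (i <= n)%nat -> Rl i (f i).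
Proof.
  intros H.
  assert (H' : forall i, exists t, (i <= n)%nat -> Rl i t).
  { intros i. destruct (Compare_dec.le_dec i n) as [Hi|Hi].
    - destruct (H i Hi) as [t Ht]. exists t; auto.
    - exists t0. intros; contradiction. }
  exists (fun i => proj1_sig (constructive_indefinite_description _ (H' i))).
  intros i Hi. exact (proj2_sig (constructive_indefinite_description _ (H' i)) Hi).
Qed.

Lemma esup_some S l : esup S = Some l -> is_lub S l.
Proof.
  unfold esup. destruct (excluded_middle_informative _) as [h|h]; intros E; [|discriminate].
  inversion E; subst. exact (proj2_sig (completeness S (proj1 h) (proj2 h))).
Qed.

Lemma esup_exists S : bound S -> (exists x, S x) -> exists l, esup S = Some l.
Proof.
  intros Hb Hn. unfold esup. destruct (excluded_middle_informative _) as [h|h].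
  - eexists; reflexivity.
  - exfalso; auto.
Qed.

Lemma esup_le S v : (forall r, S r -> r <= v) -> ele (esup S) (Some v).
Proof.
  intros H. destruct (esup S) eqn:E; simpl; auto.
  apply esup_some in E. apply E. intros x Hx; auto.
Qed.

Lemma esup_ge S v r : (forall r0, S r0 -> r0 <= v) -> S r -> exists l, esup S = Some l /\ r <= l.
Proof.
  intros H Hr. destruct (esup_exists S) as [l El].
  - exists v. intros x Hx; auto.
  - eauto.
  - exists l. split; auto. apply esup_some in El. apply El; auto.
Qed.

Section Mat.
Variable M : nat.
Variable T : Type.
Variable a : nat -> T -> nat -> R.

Definition rs (i : nat) (t : T) := sum_f_R0 (fun j => a i t j) M.

Definition rowH (i : nat) (t : T) : Prop :=
  wdd_row M a i t /\
  (forall j, (j <= M)%nat -> j <> i -> a i t j <= 0) /\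
  0 <= a i t i /\ (~ sdd_row M a i t -> a i t i <= 1).

Definition ZR (P : nat -> T) (K : nat -> Prop) : Prop :=
  (exists p, (p <= M)%nat /\ K p) /\
  forall p, (p <= M)%nat -> K p -> rs p (P p) = 0 /\
    forall j, (j <= M)%nat -> a p (P p) j <> 0 -> K j.

Lemma offdiag_eq i t : (i <= M)%nat -> rowH i t ->
  offdiag_abs M a i t = - sum_f_R0 (fun j => if Nat.eq_dec j i then 0 else a i t j) M.
Proof.
  intros Hi [_ [Hz _]]. unfold offdiag_abs. rewrite <- sum_opp. apply sum_eq.
  intros j Hj. destruct (Nat.eq_dec j i); [lra|]. rewrite Rabs_left1; auto.
Qed.

Lemma rs_split i t : (i <= M)%nat ->
  rs i t = a i t i + sum_f_R0 (fun j => if Nat.eq_dec j i then 0 else a i t j) M.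
Proof. intros Hi. unfold rs. apply (sum_split (fun j => a i t j)); auto. Qed.

Lemma rs_nonneg i t : (i <= M)%nat -> rowH i t -> 0 <= rs i t.
Proof.
  intros Hi H. pose proof (offdiag_eq i t Hi H) as E. destruct H as [Hw [_ [Hd _]]].
  unfold wdd_row in Hw. rewrite E, Rabs_right in Hw by lra. rewrite rs_split by auto. lra.
Qed.

Lemma rs_zero_nsdd i t : (i <= M)%nat -> rowH i t -> rs i t = 0 -> ~ sdd_row M a i t.
Proof.
  intros Hi H Hr. pose proof (offdiag_eq i t Hi H) as E. destruct H as [Hw [_ [Hd _]]].
  unfold sdd_row. rewrite E, Rabs_right by lra. rewrite rs_split in Hr by auto. lra.
Qed.

Lemma decomp i t (x : nat -> R) m :
  sum_f_R0 (fun j => a i t j * x j) M = m * rs i t + sum_f_R0 (fun j => a i t j * (x j - m)) M.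
Proof.
  unfold rs. rewrite scal_sum. rewrite <- sum_plus. apply sum_eq. intros; ring.
Qed.

Lemma matvec_lin (P : nat -> T) (x z : nat -> R) c1 c2 i :
  matvec M a P (fun j => c1 * x j + c2 * z j) i = c1 * matvec M a P x i + c2 * matvec M a P z i.
Proof.
  unfold matvec. rewrite !scal_sum, <- sum_plus. apply sum_eq. intros; ring.
Qed.

Definition rowsH (P : nat -> T) := forall i, (i <= M)%nat -> rowH i (P i).

Lemma ker_max P (x : nat -> R) : rowsH P -> ~ (exists K, ZR P K) ->
  (forall i, (i <= M)%nat -> matvec M a P x i = 0) -> forall i, (i <= M)%nat -> x i <= 0.
Proof.
  intros HP HnK Hx.
  destruct (fin_argmax M x) as [p [Hp Hm]].
  destruct (Rle_dec (x p) 0) as [Hle|Hgt].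
  { intros i Hi. specialize (Hm i Hi). lra. }
  exfalso. apply HnK. exists (fun j => (j <= M)%nat /\ x j = x p).
  split. { exists p; auto. }
  intros q Hq [_ Hxq].
  pose proof (Hx q Hq) as E. unfold matvec in E. rewrite (decomp q (P q) x (x p)) in E.
  assert (Hterm : forall j, (j <= M)%nat -> 0 <= a q (P q) j * (x j - x p)).
  { intros j Hj. destruct (Nat.eq_dec j q) as [->|ne].
    - rewrite Hxq. lra.
    - destruct (HP q Hq) as [_ [Hz _]]. specialize (Hz j Hj ne). specialize (Hm j Hj).
      nra. }
  assert (Hs : 0 <= sum_f_R0 (fun j => a q (P q) j * (x j - x p)) M) by (apply sum_nonneg; auto).
  assert (Hr : 0 <= rs q (P q)) by (apply rs_nonneg; auto).
  assert (Hxr : 0 <= x p * rs q (P q)) by nra.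
  assert (Hs0 : sum_f_R0 (fun j => a q (P q) j * (x j - x p)) M = 0) by lra.
  split.
  - nra.
  - intros j Hj Ha. split; auto.
    pose proof (sum_nonneg_zero _ M Hterm Hs0 j Hj) as Z.
    apply Rmult_integral in Z. destruct Z; [contradiction|lra].
Qed.

Lemma ker_zero P (x : nat -> R) : rowsH P -> ~ (exists K, ZR P K) ->
  (forall i, (i <= M)%nat -> matvec M a P x i = 0) -> forall i, (i <= M)%nat -> x i = 0.
Proof.
  intros HP HnK Hx i Hi.
  pose proof (ker_max P x HP HnK Hx i Hi).
  assert (Hx' : forall i, (i <= M)%nat -> matvec M a P (fun j => (-1) * x j + 0 * x j) i = 0).
  { intros k Hk. rewrite matvec_lin, Hx by auto. ring. }
  pose proof (ker_max P _ HP HnK Hx' i Hi). simpl in H0. lra.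
Qed.

Lemma strict_pos P (z : nat -> R) : rowsH P ->
  (forall i, (i <= M)%nat -> 0 < matvec M a P z i) -> forall i, (i <= M)%nat -> 0 <= z i.
Proof.
  intros HP Hz.
  destruct (fin_argmax M (fun j => - z j)) as [p [Hp Hm]]. simpl in Hm.
  destruct (Rle_dec 0 (z p)) as [H0|Hlt].
  { intros i Hi. specialize (Hm i Hi). lra. }
  exfalso. pose proof (Hz p Hp) as E. unfold matvec in E. rewrite (decomp p (P p) z (z p)) in E.
  assert (Hterm : forall j, (j <= M)%nat -> a p (P p) j * (z j - z p) <= 0).
  { intros j Hj. destruct (Nat.eq_dec j p) as [->|ne].
    - lra.
    - destruct (HP p Hp) as [_ [Hzz _]]. specialize (Hzz j Hj ne). specialize (Hm j Hj). nra. }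
  assert (Hs : 0 <= sum_f_R0 (fun j => - (a p (P p) j * (z j - z p))) M).
  { apply sum_nonneg. intros j Hj. specialize (Hterm j Hj). lra. }
  rewrite sum_opp in Hs.
  assert (Hr : 0 <= rs p (P p)) by (apply rs_nonneg; auto).
  nra.
Qed.

Definition rightinv (P : nat -> T) (B : nat -> nat -> R) :=
  forall i j, (i <= M)%nat -> (j <= M)%nat ->
    matmul_entry M (Amat a P) B i j = (if Nat.eq_dec i j then 1 else 0).

Lemma rowsum_B P B : rightinv P B -> forall i, (i <= M)%nat ->
  matvec M a P (fun j => sum_f_R0 (fun k => B j k) M) i = 1.
Proof.
  intros HB i Hi. unfold matvec.
  rewrite (sum_eq _ (fun j => sum_f_R0 (fun k => a i (P i) j * B j k) M)).
  2:{ intros j Hj. rewrite scal_sum. apply sum_eq. intros; ring. }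
  rewrite sum_exch.
  rewrite (sum_eq _ (fun k => (if Nat.eq_dec i k then 1 else 0) * 1)).
  - apply sum_delta; auto.
  - intros k Hk. rewrite Rmult_1_r. rewrite <- HB by auto. reflexivity.
Qed.

Lemma mono P B (x : nat -> R) : rowsH P -> rightinv P B ->
  (forall i, (i <= M)%nat -> 0 <= matvec M a P x i) -> forall i, (i <= M)%nat -> 0 <= x i.
Proof.
  intros HP HB Hx i Hi.
  set (w := fun j => sum_f_R0 (fun k => B j k) M).
  assert (Hz : forall e, 0 < e -> 0 <= x i + e * w i).
  { intros e He.
    pose proof (strict_pos P (fun j => 1 * x j + e * w j) HP) as HS.
    assert (0 <= 1 * x i + e * w i); [|lra].
    apply HS; auto. intros k Hk. rewrite matvec_lin. unfold w. rewrite rowsum_B by auto.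
    specialize (Hx k Hk). lra. }
  destruct (Rle_dec 0 (x i)) as [|Hn]; auto.
  exfalso. set (e := - x i / (2 * (Rabs (w i) + 1))).
  assert (Hw : 0 < Rabs (w i) + 1) by (pose proof (Rabs_pos (w i)); lra).
  assert (He : 0 < e) by (unfold e; apply Rdiv_lt_0_compat; lra).
  specialize (Hz e He).
  assert (e * w i <= e * Rabs (w i)) by (apply Rmult_le_compat_l; [lra|apply Rle_abs]).
  assert (e * (Rabs (w i) + 1) = - x i / 2) by (unfold e; field; lra).
  nra.
Qed.

Lemma bound_sol P B C (d : nat -> R) delta : rowsH P -> rightinv P B ->
  (forall i j, (i <= M)%nat -> (j <= M)%nat -> Rabs (B i j) <= C) -> 0 <= delta ->
  (forall i, (i <= M)%nat -> matvec M a P d i <= delta) ->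
  forall i, (i <= M)%nat -> d i <= delta * (INR (S M) * C).
Proof.
  intros HP HB HC Hd Hm i Hi.
  set (w := fun j => sum_f_R0 (fun k => B j k) M).
  pose proof (mono P B (fun j => delta * w j + (-1) * d j) HP HB) as HS.
  assert (Hx : 0 <= delta * w i + (-1) * d i).
  { apply HS; auto. intros k Hk. rewrite matvec_lin. unfold w. rewrite rowsum_B by auto.
    specialize (Hm k Hk). lra. }
  assert (w i <= C * INR (S M)).
  { unfold w. apply sum_le_cte. intros k Hk. specialize (HC i k Hi Hk).
    pose proof (Rle_abs (B i k)). lra. }
  assert (delta * w i <= delta * (C * INR (S M))) by (apply Rmult_le_compat_l; auto).
  nra.
Qed.

End Mat.

Section Bell.
Variable M : nat.
Variable T : Type.
Variable a : nat -> T -> nat -> R.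
Variable y : nat -> T -> R.

Definition Kv (U : nat -> R) (P : nat -> T) (i : nat) := - matvec M a P U i + y i (P i).
Definition xr (X : ext) : R := match X with Some u => u | None => 0 end.

Lemma emul_le c X v s : 0 <= c -> ele X (Some v) -> emul c X = Some s -> s <= c * v.
Proof.
  intros Hc HX E. destruct X as [u|]; simpl in *.
  - inversion E; subst. apply Rmult_le_compat_l; auto.
  - destruct (Req_EM_T c 0); inversion E; subst. lra.
Qed.

Lemma eadd_some x z r : eadd x z = Some r -> exists u v, x = Some u /\ z = Some v /\ r = u + v.
Proof. destruct x, z; simpl; intros E; inversion E; eauto. Qed.

Lemma esum_le f n r (h : nat -> R) : esum f n = Some r ->
  (forall j s, (j <= n)%nat -> f j = Some s -> s <= h j) -> r <= sum_f_R0 h n.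
Proof.
  revert r. induction n; simpl; intros r E H.
  - apply (H 0%nat); auto.
  - apply eadd_some in E. destruct E as [u [v [E1 [E2 ->]]]].
    assert (u <= sum_f_R0 h n) by (apply IHn; auto).
    assert (v <= h (S n)) by (apply (H (S n)); auto). lra.
Qed.

Lemma esum_some f n (g : nat -> R) : (forall j, (j <= n)%nat -> f j = Some (g j)) ->
  esum f n = Some (sum_f_R0 g n).
Proof.
  induction n; simpl; intros H.
  - apply H; auto.
  - rewrite IHn by auto. rewrite H by auto. reflexivity.
Qed.

Lemma emul_some c X : (exists u, X = Some u) \/ c = 0 -> emul c X = Some (c * xr X).
Proof.
  intros [[u ->]| ->].
  - reflexivity.
  - destruct X as [u|]; simpl.
    + reflexivity.
    + destruct (Req_EM_T 0 0); [f_equal; ring|congruence].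
Qed.

Lemma yhat_inv i t r : yhat M a y i t = Some r -> ~ sdd_row M a i t /\ r = y i t.
Proof. unfold yhat. destruct (excluded_middle_informative _); intros E; inversion E; auto. Qed.

Lemma yhat_nsdd i t : ~ sdd_row M a i t -> yhat M a y i t = Some (y i t).
Proof. unfold yhat. destruct (excluded_middle_informative _); [contradiction|auto]. Qed.

Lemma Mterm_le i t X (V : nat -> R) r : (i <= M)%nat -> rowH M T a i t ->
  (forall j, (j <= M)%nat -> ele (X j) (Some (V j))) -> Mterm M a y i t X = Some r ->
  r <= V i - sum_f_R0 (fun j => a i t j * V j) M + y i t.
Proof.
  intros Hi HR HX E. unfold Mterm in E.
  apply eadd_some in E. destruct E as [u12 [u3 [E12 [E3 ->]]]].
  apply eadd_some in E12. destruct E12 as [r1 [r2 [E1 [E2 ->]]]].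
  apply yhat_inv in E3. destruct E3 as [Hns ->].
  destruct HR as [Hw [Hz [Hd H1]]]. specialize (H1 Hns).
  assert (r1 <= (1 - a i t i) * V i) by (apply (emul_le _ (X i)); auto; lra).
  assert (r2 <= sum_f_R0 (fun j => - (if Nat.eq_dec j i then 0 else a i t j * V j)) M).
  { apply (esum_le _ _ _ _ E2). intros j s Hj Ej. destruct (Nat.eq_dec j i).
    - inversion Ej; lra.
    - specialize (Hz j Hj n).
      assert (s <= - a i t j * V j) by (apply (emul_le _ (X j)); auto; lra). lra. }
  rewrite sum_opp in H0.
  rewrite (sum_split (fun j => a i t j * V j) M i Hi).
  lra.
Qed.

Variable Pset : nat -> T -> Prop.
Hypothesis H3h : H3 M a Pset.

Definition Vsuper (V : nat -> R) := forall P, inP M Pset P -> forall i, (i <= M)%nat -> Kv V P i <= 0.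

Lemma rowsH_of P : inP M Pset P -> rowsH M T a P.
Proof. intros HP i Hi. exact (H3h P HP i Hi). Qed.

Lemma Mop_bound V X i : Vsuper V -> (i <= M)%nat -> (forall j, (j <= M)%nat -> ele (X j) (Some (V j))) ->
  forall r, (exists P, inP M Pset P /\ Mterm M a y i (P i) X = Some r) -> r <= V i.
Proof.
  intros HV Hi HX r [P [HP E]].
  pose proof (Mterm_le i (P i) X V r Hi (H3h P HP i Hi) HX E).
  pose proof (HV P HP i Hi). unfold Kv, matvec in H0. lra.
Qed.

Lemma Mpow_le V : Vsuper V -> forall n i, (i <= M)%nat ->
  ele (Mpow M a y Pset n (fun j => Some (V j)) i) (Some (V i)).
Proof.
  intros HV n. induction n; intros i Hi.
  - simpl. lra.
  - simpl. unfold Mop. apply esup_le. apply Mop_bound; auto.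
Qed.

Lemma Mpow_lower V P K delta : Vsuper V -> inP M Pset P -> ZR M T a P K ->
  (forall i, (i <= M)%nat -> - delta <= Kv V P i) ->
  forall n p, (p <= M)%nat -> K p ->
  exists r, Mpow M a y Pset n (fun j => Some (V j)) p = Some r /\ V p - INR n * delta <= r.
Proof.
  intros HV HP [_ HZ] Hd n. induction n; intros p Hp Kp.
  - exists (V p). simpl. split; auto. lra.
  - set (X := Mpow M a y Pset n (fun j => Some (V j))).
    change (exists r, Mop M a y Pset X p = Some r /\ V p - INR (S n) * delta <= r).
    destruct (HZ p Hp Kp) as [Hrs Hcl].
    pose proof (H3h P HP p Hp) as HR.
    pose proof (rs_zero_nsdd M T a p (P p) Hp HR Hrs) as Hns.
    assert (Hsome : forall j, (j <= M)%nat -> (exists u, X j = Some u) \/ - a p (P p) j = 0).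
    { intros j Hj. destruct (classic (K j)) as [Kj|nKj].
      - left. destruct (IHn j Hj Kj) as [r [Er _]]. eauto.
      - right. destruct (Req_dec (a p (P p) j) 0) as [E|E]; [rewrite E; lra|].
        exfalso; apply nKj; apply (Hcl j Hj E). }
    assert (Hlow : forall j, (j <= M)%nat -> K j -> V j - INR n * delta <= xr (X j)).
    { intros j Hj Kj. destruct (IHn j Hj Kj) as [r [Er Hr]]. unfold X. rewrite Er. simpl. auto. }
    set (g := fun j => if Nat.eq_dec j p then 0 else - a p (P p) j * xr (X j)).
    set (r0 := (1 - a p (P p) p) * xr (X p) + sum_f_R0 g M + y p (P p)).
    assert (Er0 : Mterm M a y p (P p) X = Some r0).
    { unfold Mterm. rewrite (emul_some _ (X p)).
      2:{ left. destruct (IHn p Hp Kp) as [r [Er _]]. eauto. }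
      rewrite (esum_some _ M g).
      - rewrite yhat_nsdd by auto. reflexivity.
      - intros j Hj. unfold g. destruct (Nat.eq_dec j p); [reflexivity|]. apply emul_some; auto. }
    assert (HXV : forall j, (j <= M)%nat -> ele (X j) (Some (V j))) by (intros; apply Mpow_le; auto).
    destruct (esup_ge _ (V p) r0 (Mop_bound V X p HV Hp HXV)) as [l [El Hl]].
    { exists P; auto. }
    exists l. split; [exact El|].
    set (N := INR n * delta).
    assert (Hg : sum_f_R0 (fun j => - (if Nat.eq_dec j p then 0 else a p (P p) j * V j)
                 + (if Nat.eq_dec j p then 0 else a p (P p) j) * N) M <= sum_f_R0 g M).
    { apply sum_Rle. intros j Hj. unfold g. destruct (Nat.eq_dec j p); [lra|].
      destruct (classic (K j)) as [Kj|nKj].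
      - specialize (Hlow j Hj Kj). destruct HR as [_ [Hz _]]. specialize (Hz j Hj n0).
        unfold N. assert (- a p (P p) j * (V j - INR n * delta) <= - a p (P p) j * xr (X j)) by (apply Rmult_le_compat_l; lra).
        lra.
      - destruct (Req_dec (a p (P p) j) 0) as [E|E]; [rewrite E; lra|].
        exfalso; apply nKj; apply (Hcl j Hj E). }
    rewrite sum_plus, sum_opp, <- scal_sum in Hg.
    pose proof (sum_split (fun j => a p (P p) j * V j) M p Hp) as Es.
    pose proof (rs_split M T a p (P p) Hp) as Er. rewrite Hrs in Er.
    pose proof (Hd p Hp) as Hk. unfold Kv, matvec in Hk.
    destruct HR as [_ [_ [_ H1]]]. specialize (H1 Hns).
    assert ((1 - a p (P p) p) * (V p - N) <= (1 - a p (P p) p) * xr (X p)) by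
      (apply Rmult_le_compat_l; [lra|apply Hlow; auto]).
    assert (E1 : (1 - a p (P p) p) * (V p - N) = V p - N - a p (P p) p * V p + a p (P p) p * N) by ring.
    rewrite S_INR. unfold r0 in Hl. unfold N in *. nra.
Qed.

Hypothesis H4h : H4 M a y Pset.

Lemma L2 V : Vsuper V -> forall p, (p <= M)%nat -> exists e, 0 < e /\ forall d, 0 < d < e ->
  forall P, inP M Pset P -> (forall i, (i <= M)%nat -> - d <= Kv V P i) -> forall K, ZR M T a P K -> ~ K p.
Proof.
  intros HV p Hp.
  destruct (H4h V p Hp) as [m1 [m2 [Hm Helt]]].
  pose proof (Mpow_le V HV m1 p Hp) as Hu.
  destruct (Mpow M a y Pset m2 (fun j => Some (V j)) p) as [r2|] eqn:E2.
  - destruct (Mpow M a y Pset m1 (fun j => Some (V j)) p) as [r1|] eqn:E1; simpl in Helt, Hu; [|contradiction].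
    pose proof (pos_INR m2).
    exists ((V p - r2) / (INR m2 + 1)). split. { apply Rdiv_lt_0_compat; lra. }
    intros d Hd P HP Hk K HK Kp.
    destruct (Mpow_lower V P K d HV HP HK Hk m2 p Hp Kp) as [r [Er Hr]].
    rewrite E2 in Er. inversion Er; subst r.
    assert (INR m2 * d <= INR m2 * ((V p - r2) / (INR m2 + 1))) by (apply Rmult_le_compat_l; lra).
    assert ((INR m2 + 1) * ((V p - r2) / (INR m2 + 1)) = V p - r2) by (field; lra).
    nra.
  - exists 1. split; [lra|]. intros d Hd P HP Hk K HK Kp.
    destruct (Mpow_lower V P K d HV HP HK Hk m2 p Hp Kp) as [r [Er Hr]].
    rewrite E2 in Er. discriminate.
Qed.

End Bell.

Module BR.
From mathcomp Require Import all_boot all_algebra.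
From mathcomp Require Import Rstruct.
Import GRing.Theory.
Local Open Scope ring_scope.

Lemma sumR_big (f : nat -> R) (n : nat) :
  sum_f_R0 f n = (\sum_(k < n.+1) f k)%R.
Proof.
elim: n => [|n IH]; first by rewrite big_ord_recr big_ord0 /= add0r.
by rewrite big_ord_recr /= IH.
Qed.

Lemma inv_exists (M : nat) (A : nat -> nat -> R) :
  (forall x : nat -> R, (forall i, le i M -> sum_f_R0 (fun j => Rmult (A i j) (x j)) M = IZR Z0) ->
     forall i, le i M -> x i = IZR Z0) ->
  exists B, is_inverse M A B.
Proof.
move=> Hker.
pose Am : 'M[R]_(M.+1) := \matrix_(i < M.+1, j < M.+1) A i j.
have Hu : Am \in unitmx.
  rewrite unitmxE unitfE -det_tr.
  apply/negP => /det0P [v nz0 vA].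
  move/negP: nz0; apply; apply/eqP/matrixP => i j.
  have Hx := Hker (fun k => v 0 (inord k)).
  rewrite ord1 mxE.
  have -> : v 0 j = v 0 (inord j) by rewrite inord_val.
  apply: Hx; last by apply/leP; rewrite -ltnS.
  move=> k /leP Hk.
  etransitivity; first exact: sumR_big.
  transitivity ((v *m Am^T) 0 (inord k)); last by rewrite vA mxE.
  rewrite mxE; apply: eq_bigr => l _; rewrite !mxE inordK // mulrC inord_val //.
exists (fun i j => invmx Am (inord i) (inord j)).
move=> i j Hi Hj.
move/leP: Hi => Hi; move/leP: Hj => Hj.
have Eij : (inord i == inord j :> 'I_M.+1) = (if Nat.eq_dec i j then true else false).
  destruct (Nat.eq_dec i j) as [->|ne]; first by rewrite eqxx.
  case: eqP => [E|_]; last by []. exfalso; apply: ne; have := congr1 (@nat_of_ord _) E; rewrite !inordK ?ltnS //.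
have Eij' : (if Nat.eq_dec i j then 1 else 0) = ((inord i == inord j :> 'I_M.+1)%:R) :> R.
  by rewrite Eij; destruct (Nat.eq_dec i j).
rewrite /matmul_entry; split.
- etransitivity; first exact: sumR_big.
  transitivity ((Am *m invmx Am) (inord i) (inord j)); last first.
    rewrite mulmxV // mxE Eij; destruct (Nat.eq_dec i j); reflexivity.
  rewrite mxE; apply: eq_bigr => l _; rewrite !mxE inordK ?ltnS // inord_val //.
- etransitivity; first exact: sumR_big.
  transitivity ((invmx Am *m Am) (inord i) (inord j)); last by rewrite mulVmx // mxE Eij; destruct (Nat.eq_dec i j); reflexivity.
  rewrite mxE; apply: eq_bigr => l _; rewrite !mxE inordK ?ltnS // inord_val //.
Qed.
End BR.

Section HS.
Variable M : nat.
Variable T : Type.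
Variable a : nat -> T -> nat -> R.
Variable y : nat -> T -> R.

Notation Kv := (Kv M T a y).

Lemma HS_gen Q U i h : Hsup M a y Q U i = Some h ->
  (forall P, inP M Q P -> Kv U P i <= h) /\ (forall d, 0 < d -> exists P, inP M Q P /\ h - d < Kv U P i).
Proof.
  unfold Hsup. intros E. apply esup_some in E. destruct E as [Hub Hl]. split.
  - intros P HP. apply Hub. exists P; split; auto.
  - intros d Hd. apply not_all_not_ex. intros Hn.
    assert (h <= h - d); [|lra].
    apply Hl. intros r [P [HP ->]]. specialize (Hn P). apply Rnot_lt_le. intro; apply Hn; split; auto.
Qed.

Lemma HS2 Q U i : (forall P, inP M Q P -> Kv U P i <= 0) ->
  (forall d, 0 < d -> exists P, inP M Q P /\ - d < Kv U P i) -> Hsup M a y Q U i = Some 0.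
Proof.
  intros Hu Hl. unfold Hsup.
  destruct (esup_exists (fun r => exists P, inP M Q P /\ r = - matvec M a P U i + y i (P i))) as [l E].
  - exists 0. intros r [P [HP ->]]. apply Hu; auto.
  - destruct (Hl 1 Rlt_0_1) as [P [HP _]]. eexists; exists P; split; eauto.
  - rewrite E. apply esup_some in E. destruct E as [Hub Hlub]. f_equal.
    assert (l <= 0) by (apply Hlub; intros r [P [HP ->]]; apply Hu; auto).
    destruct (Rle_dec 0 l); [lra|].
    destruct (Hl (- l) ltac:(lra)) as [P [HP HP2]].
    assert (Kv U P i <= l) by (apply Hub; exists P; split; auto). lra.
Qed.

Variable Pset : nat -> T -> Prop.
Variable Ca : R.
Hypothesis HCa : forall P, inP M Pset P ->
    forall i, (i <= M)%nat -> Rabs (y i (P i)) <= Ca /\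
      forall j, (j <= M)%nat -> Rabs (a i (P i) j) <= Ca.

Lemma matvec_abs P U i : inP M Pset P -> (i <= M)%nat ->
  Rabs (matvec M a P U i) <= Ca * sum_f_R0 (fun j => Rabs (U j)) M.
Proof.
  intros HP Hi. unfold matvec. eapply Rle_trans; [apply sum_f_R0_triangle|].
  rewrite scal_sum. apply sum_Rle. intros j Hj. rewrite Rabs_mult, (Rmult_comm (Rabs (U j))).
  apply Rmult_le_compat_r; [apply Rabs_pos|]. apply (HCa P HP i Hi); auto.
Qed.

Lemma matvec_lip P X Z i eta : inP M Pset P -> (i <= M)%nat -> 
  (forall j, (j <= M)%nat -> Rabs (X j - Z j) <= eta) ->
  Rabs (matvec M a P X i - matvec M a P Z i) <= Ca * INR (S M) * eta.
Proof.
  intros HP Hi H.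
  assert (E : matvec M a P X i - matvec M a P Z i = matvec M a P (fun j => X j - Z j) i).
  { unfold matvec. rewrite <- minus_sum. apply sum_eq. intros; ring. }
  rewrite E. eapply Rle_trans; [apply matvec_abs; auto|].
  assert (Hc : 0 <= Ca) by (pose proof (proj1 (HCa P HP i Hi)); pose proof (Rabs_pos (y i (P i))); lra).
  assert (sum_f_R0 (fun j => Rabs (X j - Z j)) M <= eta * INR (S M)) by (apply sum_le_cte; auto).
  assert (Ca * sum_f_R0 (fun j => Rabs (X j - Z j)) M <= Ca * (eta * INR (S M))) by (apply Rmult_le_compat_l; auto).
  lra.
Qed.

Lemma HS_exists Q U i : (forall P, inP M Q P -> inP M Pset P) -> (exists P, inP M Q P) -> (i <= M)%nat ->
  exists h, Hsup M a y Q U i = Some h.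
Proof.
  intros HQ [P0 HP0] Hi. unfold Hsup. apply esup_exists.
  - exists (Ca * sum_f_R0 (fun j => Rabs (U j)) M + Ca). intros r [P [HP ->]].
    pose proof (matvec_abs P U i (HQ P HP) Hi). pose proof (proj1 (HCa P (HQ P HP) i Hi)).
    pose proof (Rle_abs (- matvec M a P U i)). pose proof (Rle_abs (y i (P i))).
    rewrite Rabs_Ropp in H1. lra.
  - eexists; exists P0; split; eauto.
Qed.

End HS.

Section Comp.
Variable M : nat.
Variable T : Type.
Variable a : nat -> T -> nat -> R.
Variable y : nat -> T -> R.
Variable Pset : nat -> T -> Prop.
Notation Kv := (Kv M T a y).
Hypothesis H1h : H1 M a Pset.
Hypothesis H3h : H3 M a Pset.
Hypothesis H4h : H4 M a y Pset.
Variable t0 : T.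

Lemma comparison V U : (forall i, (i <= M)%nat -> Hsup M a y Pset V i = Some 0) ->
  Vsuper M T a y Pset U -> forall i, (i <= M)%nat -> V i <= U i.
Proof.
  intros HVs HU.
  assert (HV : Vsuper M T a y Pset V).
  { intros P HP i Hi. apply (proj1 (HS_gen M T a y Pset V i 0 (HVs i Hi))); auto. }
  destruct (Rle_dec 0 0) as [_|]; [|lra].
  apply NNPP. intros Hn. apply not_all_ex_not in Hn. destruct Hn as [q Hq].
  apply imply_to_and in Hq. destruct Hq as [Hqm Hq]. apply Rnot_le_lt in Hq.
  set (c := V q - U q).
  destruct (fin_eps M _ (L2 M T a y Pset H3h H4h V HV)) as [e0 [He0 Hl2]].
  destruct H1h as [C HC].
  set (C' := Rabs C + 1).
  assert (HC' : 0 < C') by (unfold C'; pose proof (Rabs_pos C); lra).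
  assert (HSM : 0 < INR (S M)) by (apply lt_0_INR; lia).
  set (d := Rmin (e0 / 2) (c / (2 * (INR (S M) * C')))).
  assert (Hd0 : 0 < d).
  { unfold d. apply Rmin_case; [lra|]. apply Rdiv_lt_0_compat; [unfold c; lra|nra]. }
  assert (Hde : d < e0) by (unfold d; pose proof (Rmin_l (e0/2) (c / (2 * (INR (S M) * C')))); lra).
  assert (Hdc : d * (INR (S M) * C') < c).
  { unfold d. pose proof (Rmin_r (e0/2) (c / (2 * (INR (S M) * C')))) as Hm.
    assert (Hpos : 0 < INR (S M) * C') by nra.
    assert (Rmin (e0 / 2) (c / (2 * (INR (S M) * C'))) * (INR (S M) * C') <=
            (c / (2 * (INR (S M) * C'))) * (INR (S M) * C')) by (apply Rmult_le_compat_r; lra).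
    assert ((c / (2 * (INR (S M) * C'))) * (INR (S M) * C') = c / 2) by (field; lra).
    unfold c in *. lra. }
  destruct (glue t0 M (fun i t => Pset i t /\ - d <= - sum_f_R0 (fun j => a i t j * V j) M + y i t)) as [P HPf].
  { intros i Hi. destruct (proj2 (HS_gen M T a y Pset V i 0 (HVs i Hi)) d Hd0) as [P [HP HPk]].
    exists (P i). split; [apply HP; auto|]. unfold Kv, matvec in HPk. lra. }
  assert (HP : inP M Pset P) by (intros i Hi; apply HPf; auto).
  assert (HPk : forall i, (i <= M)%nat -> - d <= Kv V P i) by (intros i Hi; apply HPf; auto).
  destruct (classic (exists K, ZR M T a P K)) as [[K HK]|HnK].
  - destruct HK as [[p [Hp Kp]] HK'].
    exact (Hl2 d (conj Hd0 Hde) p Hp P HP HPk K (conj (ex_intro _ p (conj Hp Kp)) HK') Kp).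
  - destruct (BR.inv_exists M (Amat a P)) as [B HB].
    { intros x Hx. apply (ker_zero M T a P x (rowsH_of M T a Pset H3h P HP) HnK). intros i Hi; apply Hx; auto. }
    assert (HBr : rightinv M T a P B) by (intros i j Hi Hj; apply (HB i j Hi Hj)).
    assert (HBC : forall i j, (i <= M)%nat -> (j <= M)%nat -> Rabs (B i j) <= C') .
    { intros i j Hi Hj. pose proof (HC P B HP HB i j Hi Hj). unfold C'. pose proof (Rle_abs C). lra. }
    pose proof (bound_sol M T a P B C' (fun j => V j - U j) d (rowsH_of M T a Pset H3h P HP) HBr HBC ltac:(lra)) as Hb.
    assert (Hq' : V q - U q <= d * (INR (S M) * C')).
    { apply (Hb) ; auto. intros i Hi.
      assert (E : matvec M a P (fun j => V j - U j) i = matvec M a P (fun j => 1 * V j + (-1) * U j) i)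
        by (unfold matvec; apply sum_eq; intros; ring).
      rewrite E, matvec_lin. pose proof (HPk i Hi). pose proof (HU P HP i Hi). unfold Kv in *. lra. }
    unfold c in Hdc. lra.
Qed.

End Comp.

Lemma cv_ext (u v : nat -> R) l : (forall n, u n = v n) -> Un_cv u l -> Un_cv v l.
Proof. intros E H e He. destruct (H e He) as [N HN]. exists N. intros n Hn. rewrite <- E. auto. Qed.

Lemma cv_shift (u : nat -> R) l : Un_cv u l -> Un_cv (fun n => u (S n)) l.
Proof. intros H e He. destruct (H e He) as [N HN]. exists N. intros n Hn. apply HN. lia. Qed.

Lemma cv_unshift (u : nat -> R) l : Un_cv (fun n => u (S n)) l -> Un_cv u l.
Proof.
  intros H e He. destruct (H e He) as [N HN]. exists (S N). intros n Hn.
  destruct n as [|n]; [lia|]. apply (HN n). lia.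
Qed.

Lemma cv_const c : Un_cv (fun _ => c) c.
Proof. intros e He. exists 0%nat. intros. unfold R_dist. rewrite Rminus_diag, Rabs_R0. auto. Qed.

Fixpoint iterseq {A : Type} (f : nat -> A -> A) (x0 : A) (n : nat) : A :=
  match n with O => x0 | S k => f (S k) (iterseq f x0 k) end.

Section PI.
Variable M : nat.
Variable T : Type.
Variable a : nat -> T -> nat -> R.
Variable y : nat -> T -> R.
Variable Pset Pset' : nat -> T -> Prop.
Notation Kv := (Kv M T a y).
Hypothesis H1h : H1 M a Pset.
Hypothesis H2h : H2 M a y Pset.
Hypothesis H3h : H3 M a Pset.
Hypothesis Hsub : forall i t, (i <= M)%nat -> Pset' i t -> Pset i t.
Hypothesis Hne' : forall i, (i <= M)%nat -> exists t, Pset' i t.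
Hypothesis Hns : forall P, inP M Pset' P -> nonsingular M (Amat a P).
Hypothesis Hhyp : forall U : nat -> R,
     (forall i, (i <= M)%nat -> Hsup M a y Pset' U i = Some 0) ->
     forall i, (i <= M)%nat -> ele (Hsup M a y Pset U i) (Some 0).
Variable t0 : T.

Lemma inP_sub P : inP M Pset' P -> inP M Pset P.
Proof. intros HP i Hi. apply Hsub; auto. Qed.

Lemma ne_P' : exists P, inP M Pset' P.
Proof. apply (glue t0 M (fun i t => Pset' i t)). auto. Qed.

Lemma PIconv eps Pol U : eps_policy_iteration M a y Pset' eps Pol U ->
  exists L, (forall i, (i <= M)%nat -> Un_cv (fun l => U l i) (L i)) /\
            (forall i, (i <= M)%nat -> Hsup M a y Pset L i = Some 0).
Proof.
  intros [Heps [[s Hs] Hstep]].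
  destruct H1h as [C HC]. destruct H2h as [Ca HCa].
  set (C' := Rabs C + 1).
  assert (HC' : 0 < C') by (unfold C'; pose proof (Rabs_pos C); lra).
  assert (HSM : 0 < INR (S M)) by (apply lt_0_INR; lia).
  destruct ne_P' as [P0 HP0].
  assert (HCa0 : 0 <= Ca).
  { pose proof (proj1 (HCa P0 (inP_sub P0 HP0) 0%nat ltac:(lia))). pose proof (Rabs_pos (y 0%nat (P0 0%nat))). lra. }
  set (D := INR (S M) * C').
  assert (HD : 0 < D) by (unfold D; nra).
  assert (HB : forall l, (1 <= l)%nat -> exists B, rightinv M T a (Pol l) B /\
             forall i j, (i <= M)%nat -> (j <= M)%nat -> Rabs (B i j) <= C').
  { intros l Hl. destruct (Hstep l Hl) as [HPl _]. destruct (Hns _ HPl) as [B HBi].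
    exists B. split. { intros i j Hi Hj. apply (HBi i j Hi Hj). }
    intros i j Hi Hj. pose proof (HC _ B (inP_sub _ HPl) HBi i j Hi Hj). unfold C'. pose proof (Rle_abs C). lra. }
  assert (Hrows : forall l, (1 <= l)%nat -> rowsH M T a (Pol l)).
  { intros l Hl. apply (rowsH_of M T a Pset H3h). apply inP_sub. apply Hstep; auto. }
  set (Kb := Ca * D).
  assert (Hbd : forall l, (1 <= l)%nat -> forall i, (i <= M)%nat -> Rabs (U l i) <= Kb).
  { intros l Hl i Hi. destruct (HB l Hl) as [B [HBr HBc]].
    destruct (Hstep l Hl) as [HPl [_ Hsol]].
    pose proof (bound_sol M T a (Pol l) B C' (fun j => (-1) * U l j + 0 * U l j) Ca (Hrows l Hl) HBr HBc HCa0) as Hb1.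
    pose proof (bound_sol M T a (Pol l) B C' (U l) Ca (Hrows l Hl) HBr HBc HCa0) as Hb2.
    assert (Q1 : (-1) * U l i + 0 * U l i <= Ca * D).
    { apply Hb1; auto. intros k Hk. rewrite matvec_lin, Hsol by auto.
      pose proof (proj1 (HCa _ (inP_sub _ HPl) k Hk)). pose proof (Rle_abs (- y k (Pol l k))). rewrite Rabs_Ropp in H0. lra. }
    assert (Q2 : U l i <= Ca * D).
    { apply Hb2; auto. intros k Hk. rewrite Hsol by auto.
      pose proof (proj1 (HCa _ (inP_sub _ HPl) k Hk)). pose proof (Rle_abs (y k (Pol l k))). lra. }
    unfold Kb. apply Rabs_le. split; lra. }
  assert (Hh : forall l i, (i <= M)%nat -> exists h, Hsup M a y Pset' (U l) i = Some h).
  { intros l i Hi. apply (HS_exists M T a y Pset Ca HCa); auto. apply inP_sub. exists P0; auto. }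
  assert (Hkv : forall l, (2 <= l)%nat -> forall i, (i <= M)%nat -> - eps l <= Kv (U (l - 1)%nat) (Pol l) i).
  { intros l Hl i Hi. destruct (Hstep l ltac:(lia)) as [HPl [Hele _]].
    destruct (Hstep (l - 1)%nat ltac:(lia)) as [HPl1 [_ Hsol1]].
    destruct (Hh (l - 1)%nat i Hi) as [h Eh].
    specialize (Hele i Hi). rewrite Eh in Hele. simpl in Hele.
    pose proof (proj1 (HS_gen M T a y Pset' _ i h Eh) _ HPl1). unfold Kv in *.
    rewrite Hsol1 in H by auto. lra. }
  assert (Hdec : forall l, (2 <= l)%nat -> forall i, (i <= M)%nat -> U (l - 1)%nat i - U l i <= eps l * D).
  { intros l Hl i Hi. destruct (HB l ltac:(lia)) as [B [HBr HBc]].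
    destruct (Hstep l ltac:(lia)) as [HPl [_ Hsol]].
    assert (Hq : 1 * U (l - 1)%nat i + (-1) * U l i <= eps l * D); [|lra].
    apply (bound_sol M T a (Pol l) B C' (fun j => 1 * U (l - 1)%nat j + (-1) * U l j) (eps l) (Hrows l ltac:(lia)) HBr HBc); auto.
    { apply Rlt_le, Heps; lia. }
    intros k Hk. rewrite matvec_lin, Hsol by auto. pose proof (Hkv l Hl k Hk). unfold Kv in H. lra. }
  set (Sn := fun n => sum_f_R0 eps n).
  assert (Sgrow : Un_growing Sn).
  { intros n. unfold Sn. rewrite tech5. pose proof (Heps (S n) ltac:(lia)). lra. }
  assert (Sle : forall n, Sn n <= s) by (apply growing_ineq; auto).
  assert (Hcv : forall i, (i <= M)%nat -> exists Li, Un_cv (fun l => U l i) Li).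
  { intros i Hi.
    set (Y := fun n => U (S n) i + D * Sn (S n)).
    assert (Yg : Un_growing Y).
    { intros n. unfold Y. unfold Sn at 2. rewrite tech5. fold (Sn (S n)).
      pose proof (Hdec (S (S n)) ltac:(lia) i Hi). replace (S (S n) - 1)%nat with (S n) in H by lia.
      lra. }
    assert (Yb : has_ub Y).
    { exists (Kb + D * s). intros r [n ->]. unfold Y.
      pose proof (Hbd (S n) ltac:(lia) i Hi). pose proof (Rle_abs (U (S n) i)).
      pose proof (Sle (S n)). assert (D * Sn (S n) <= D * s) by (apply Rmult_le_compat_l; lra). lra. }
    destruct (growing_cv Y Yg Yb) as [LY HLY].
    exists (LY - D * s). apply cv_unshift.
    apply (cv_ext (fun n => Y n - D * Sn (S n))).
    { intros n. unfold Y. ring. }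
    apply CV_minus; auto. apply CV_mult; [apply cv_const|]. apply (cv_shift Sn). exact Hs. }
  assert (Hex : forall i, exists Li, (i <= M)%nat -> Un_cv (fun l => U l i) Li).
  { intros i. destruct (Compare_dec.le_dec i M) as [Hi|Hi].
    - destruct (Hcv i Hi) as [Li HLi]. exists Li; auto.
    - exists 0. intros; contradiction. }
  set (L := fun i => proj1_sig (constructive_indefinite_description _ (Hex i))).
  assert (HL : forall i, (i <= M)%nat -> Un_cv (fun l => U l i) (L i)).
  { intros i Hi. exact (proj2_sig (constructive_indefinite_description _ (Hex i)) Hi). }
  exists L. split; [exact HL|].
  assert (Hunif : forall eta, 0 < eta -> exists N, forall k, (k >= N)%nat -> forall j, (j <= M)%nat ->
            Rabs (U k j - L j) <= eta).
  { intros eta He. apply (fin_N M (fun j k => Rabs (U k j - L j) <= eta)).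
    intros j Hj. destruct (HL j Hj eta He) as [N HN]. exists N. intros k Hk.
    specialize (HN k Hk). unfold R_dist in HN. lra. }
  assert (Heps0 : forall eta, 0 < eta -> exists N, forall l, (l >= N)%nat -> eps l < eta).
  { intros eta He. destruct (Hs (eta / 2) ltac:(lra)) as [N HN]. exists (S N). intros l Hl.
    destruct l as [|k]; [lia|].
    pose proof (HN (S k) ltac:(lia)). pose proof (HN k ltac:(lia)). unfold R_dist in *.
    rewrite tech5 in H.
    pose proof (Rle_abs (sum_f_R0 eps k + eps (S k) - s)). pose proof (Rle_abs (sum_f_R0 eps k - s)).
    pose proof (Rabs_Ropp (sum_f_R0 eps k - s)). pose proof (Rle_abs (- (sum_f_R0 eps k - s))). lra. }
  set (Lip := Ca * INR (S M)).
  assert (HLip : 0 <= Lip) by (unfold Lip; nra).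
  assert (Kv_lip : forall P X Z i eta, inP M Pset P -> (i <= M)%nat ->
            (forall j, (j <= M)%nat -> Rabs (X j - Z j) <= eta) -> Kv X P i <= Kv Z P i + Lip * eta).
  { intros P X Z i eta HP Hi H. pose proof (matvec_lip M T a y Pset Ca HCa P Z X i eta HP Hi) as Hl.
    assert (Hl' : Rabs (matvec M a P Z i - matvec M a P X i) <= Ca * INR (S M) * eta).
    { apply Hl. intros j Hj. rewrite <- Rabs_Ropp. replace (- (Z j - X j)) with (X j - Z j) by ring. auto. }
    unfold Kv, Lip. pose proof (Rle_abs (matvec M a P Z i - matvec M a P X i)). lra. }
  assert (HS' : forall i, (i <= M)%nat -> Hsup M a y Pset' L i = Some 0).
  { intros i Hi. apply HS2.
    - intros P HP. apply Rnot_lt_le. intros Hk.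
      set (kap := Kv L P i) in *.
      set (eta := kap / (3 * Lip + 2)).
      assert (Het : 0 < eta) by (unfold eta; apply Rdiv_lt_0_compat; lra).
      destruct (Hunif eta Het) as [N1 HN1]. destruct (Heps0 eta Het) as [N2 HN2].
      set (l := (max N1 N2 + 2)%nat).
      assert (A1 : kap <= Kv (U (l - 1)%nat) P i + Lip * eta).
      { apply Kv_lip; [apply inP_sub; auto|auto|]. intros j Hj.
        rewrite <- Rabs_Ropp. replace (- (L j - U (l - 1)%nat j)) with (U (l - 1)%nat j - L j) by ring.
        apply HN1; [unfold l; lia|auto]. }
      destruct (Hh (l - 1)%nat i Hi) as [h Eh].
      assert (A2 : Kv (U (l - 1)%nat) P i <= h) by (apply (proj1 (HS_gen M T a y Pset' _ i h Eh)); auto).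
      destruct (Hstep l ltac:(unfold l; lia)) as [HPl [Hele Hsol]].
      specialize (Hele i Hi). rewrite Eh in Hele. simpl in Hele.
      assert (A3 : Kv (U (l - 1)%nat) (Pol l) i <= Kv (U l) (Pol l) i + Lip * (2 * eta)).
      { apply Kv_lip; [apply inP_sub; auto|auto|]. intros j Hj.
        pose proof (HN1 (l - 1)%nat ltac:(unfold l; lia) j Hj). pose proof (HN1 l ltac:(unfold l; lia) j Hj).
        replace (U (l - 1)%nat j - U l j) with ((U (l - 1)%nat j - L j) - (U l j - L j)) by ring.
        eapply Rle_trans; [apply Rabs_triang|]. rewrite Rabs_Ropp. lra. }
      assert (A4 : Kv (U l) (Pol l) i = 0) by (unfold Kv; rewrite Hsol by auto; ring).
      pose proof (HN2 l ltac:(unfold l; lia)).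
      assert (E : kap = (3 * Lip + 2) * eta) by (unfold eta; field; lra).
      unfold Kv in Hele. fold (Kv (U (l - 1)%nat) (Pol l) i) in Hele. nra.
    - intros d Hd. set (eta := d / (Lip + 1)).
      assert (Het : 0 < eta) by (unfold eta; apply Rdiv_lt_0_compat; lra).
      destruct (Hunif eta Het) as [N HN].
      destruct (Hstep (S N) ltac:(lia)) as [HPl [_ Hsol]].
      exists (Pol (S N)). split; auto.
      assert (A1 : Kv (U (S N)) (Pol (S N)) i <= Kv L (Pol (S N)) i + Lip * eta).
      { apply Kv_lip; [apply inP_sub; auto|auto|]. intros j Hj. apply HN; auto. }
      assert (A4 : Kv (U (S N)) (Pol (S N)) i = 0) by (unfold Kv; rewrite Hsol by auto; ring).
      assert (E : d = (Lip + 1) * eta) by (unfold eta; field; lra).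
      nra. }
  intros i Hi.
  pose proof (Hhyp L HS' i Hi) as Hle.
  destruct (HS_exists M T a y Pset Ca HCa Pset L i (fun P HP => HP) (ex_intro _ P0 (inP_sub _ HP0)) Hi) as [h Eh].
  rewrite Eh in Hle. simpl in Hle.
  apply HS2.
  - intros P HP. pose proof (proj1 (HS_gen M T a y Pset L i h Eh) P HP). lra.
  - intros d Hd. destruct (proj2 (HS_gen M T a y Pset' L i 0 (HS' i Hi)) d Hd) as [P [HP HPk]].
    exists P. split; [apply inP_sub; auto|lra].
Qed.

End PI.

Section EX.
Variable M : nat.
Variable T : Type.
Variable a : nat -> T -> nat -> R.
Variable y : nat -> T -> R.
Variable Pset Pset' : nat -> T -> Prop.
Hypothesis H2h : H2 M a y Pset.
Hypothesis Hsub : forall i t, (i <= M)%nat -> Pset' i t -> Pset i t.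
Hypothesis Hne' : forall i, (i <= M)%nat -> exists t, Pset' i t.
Hypothesis Hns : forall P, inP M Pset' P -> nonsingular M (Amat a P).
Variable t0 : T.

Lemma EX : exists eps Pol U, eps_policy_iteration M a y Pset' eps Pol U.
Proof.
  destruct H2h as [Ca HCa].
  destruct (ne_P' M T Pset' Hne' t0) as [P0 HP0].
  assert (Hsub' : forall P, inP M Pset' P -> inP M Pset P) by (intros P HP i Hi; apply Hsub; auto).
  assert (step : forall (e : R) (W : nat -> R), exists p : (nat -> T) * (nat -> R), 0 < e ->
    inP M Pset' (fst p) /\
    (forall i, (i <= M)%nat -> ele (Hsup M a y Pset' W i)
        (Some (- matvec M a (fst p) W i + y i (fst p i) + e))) /\
    (forall i, (i <= M)%nat -> matvec M a (fst p) (snd p) i = y i (fst p i))).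
  { intros e W. destruct (Rlt_dec 0 e) as [He|He]; [|exists (P0, W); intros; lra].
    destruct (glue t0 M (fun i t => Pset' i t /\ forall h, Hsup M a y Pset' W i = Some h ->
                 h <= - sum_f_R0 (fun j => a i t j * W j) M + y i t + e)) as [P HP].
    { intros i Hi. destruct (HS_exists M T a y Pset Ca HCa Pset' W i Hsub' (ex_intro _ P0 HP0) Hi) as [h0 Eh0].
      destruct (proj2 (HS_gen M T a y Pset' W i h0 Eh0) e He) as [Q [HQ HQk]].
      exists (Q i). split; [apply HQ; auto|]. intros h Eh. rewrite Eh0 in Eh. inversion Eh; subst.
      unfold Kv, matvec in HQk. lra. }
    assert (HPin : inP M Pset' P) by (intros i Hi; apply HP; auto).
    destruct (Hns P HPin) as [B HB].
    exists (P, fun j => sum_f_R0 (fun k => B j k * y k (P k)) M). intros _. simpl.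
    split; [auto|split].
    - intros i Hi. destruct (HS_exists M T a y Pset Ca HCa Pset' W i Hsub' (ex_intro _ P0 HP0) Hi) as [h0 Eh0].
      rewrite Eh0. simpl. apply (proj2 (HP i Hi)); auto.
    - intros i Hi. unfold matvec.
      rewrite (sum_eq _ (fun j => sum_f_R0 (fun k => a i (P i) j * B j k * y k (P k)) M)).
      2:{ intros j Hj. rewrite scal_sum. apply sum_eq. intros; ring. }
      rewrite sum_exch.
      rewrite (sum_eq _ (fun k => (if Nat.eq_dec i k then 1 else 0) * y k (P k))).
      + apply sum_delta; auto.
      + intros k Hk. rewrite <- (proj1 (HB i k Hi Hk)). unfold matmul_entry, Amat.
        rewrite Rmult_comm, scal_sum. apply sum_eq. intros; ring. }
  set (F := fun e W => proj1_sig (constructive_indefinite_description _ (step e W))).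
  set (epsf := fun l : nat => (/ 2) ^ l).
  set (sq := iterseq (fun l p => F (epsf l) (snd p)) (P0, fun _ : nat => 0)).
  exists epsf, (fun l => fst (sq l)), (fun l => snd (sq l)).
  split; [|split].
  - intros l Hl. unfold epsf. apply pow_lt. lra.
  - exists (/ (1 - / 2)). intros e He.
    assert (Hx : Rabs (/ 2) < 1) by (rewrite Rabs_right; lra).
    destruct (GP_infinite (/ 2) Hx e He) as [N HN]. exists N. intros n Hn.
    specialize (HN n Hn). rewrite (sum_eq _ (fun k => 1 * (/ 2) ^ k)); auto.
    intros; unfold epsf; ring.
  - intros l Hl. destruct l as [|k]; [lia|].
    replace (S k - 1)%nat with k by lia.
    assert (He : 0 < epsf (S k)) by (unfold epsf; apply pow_lt; lra).
    exact (proj2_sig (constructive_indefinite_description _ (step (epsf (S k)) (snd (sq k)))) He).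
Qed.
End EX.

Theorem theorem3p10 (M : nat) (T : Type) (a : nat -> T -> nat -> R) (y : nat -> T -> R)
  (Pset Pset' : nat -> T -> Prop) :
  (forall i, (i <= M)%nat -> exists t, Pset i t) ->
  H1 M a Pset -> H2 M a y Pset -> H3 M a Pset -> H4 M a y Pset ->
  (forall i t, (i <= M)%nat -> Pset' i t -> Pset i t) ->
  (forall i, (i <= M)%nat -> exists t, Pset' i t) ->
  (forall P, inP M Pset' P -> nonsingular M (Amat a P)) ->
  (forall U : nat -> R,
     (forall i, (i <= M)%nat -> Hsup M a y Pset' U i = Some 0) ->
     forall i, (i <= M)%nat -> ele (Hsup M a y Pset U i) (Some 0)) ->
  exists Ustar : nat -> R,
    (forall i, (i <= M)%nat -> Hsup M a y Pset Ustar i = Some 0) /\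
    (forall V : nat -> R,
       (forall i, (i <= M)%nat -> Hsup M a y Pset V i = Some 0) ->
       forall i, (i <= M)%nat -> V i = Ustar i) /\
    (forall eps Pol U, eps_policy_iteration M a y Pset' eps Pol U ->
       forall i, (i <= M)%nat -> Un_cv (fun l => U l i) (Ustar i)).
Proof.
  intros Hne H1h H2h H3h H4h Hsub Hne' Hns Hhyp.
  destruct (Hne' 0%nat ltac:(lia)) as [t0 _].
  destruct (EX M T a y Pset Pset' H2h Hsub Hne' Hns t0) as [eps [Pol [U Hpi]]].
  destruct (PIconv M T a y Pset Pset' H1h H2h H3h Hsub Hne' Hns Hhyp t0 eps Pol U Hpi) as [L [_ HL]].
  assert (Hsup_sol : forall V, (forall i, (i <= M)%nat -> Hsup M a y Pset V i = Some 0) -> Vsuper M T a y Pset V).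
  { intros V HV P HP i Hi. apply (proj1 (HS_gen M T a y Pset V i 0 (HV i Hi))); auto. }
  assert (Huniq : forall V, (forall i, (i <= M)%nat -> Hsup M a y Pset V i = Some 0) ->
            forall i, (i <= M)%nat -> V i = L i).
  { intros V HV i Hi.
    pose proof (comparison M T a y Pset H1h H3h H4h t0 V L HV (Hsup_sol L HL) i Hi).
    pose proof (comparison M T a y Pset H1h H3h H4h t0 L V HL (Hsup_sol V HV) i Hi). lra. }
  exists L. split; [exact HL|split; [exact Huniq|]].
  intros eps' Pol' U' Hpi' i Hi.
  destruct (PIconv M T a y Pset Pset' H1h H2h H3h Hsub Hne' Hns Hhyp t0 eps' Pol' U' Hpi') as [L' [HcvL' HL']].
  rewrite <- (Huniq L' HL' i Hi). apply HcvL'; auto.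
Qed.
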